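(* Let $N=\binom n2$, let $s_{i_1}\cdots s_{i_N}=(s_1\cdots s_{n-1})(s_1\cdots s_{n-2})\cdots(s_1)$, and let $\Phi_{id,w_0}:\mathbb{R}_{>0}^N\to\mathbb{R}^{2^n-2}$ send $\mathbf a=(a_1,\dots,a_N)$ to the Plücker coordinates $(P_I(M(\mathbf a)))_{\emptyset\ne I\subsetneq[n]}$ of $M(\mathbf a)=x_{i_1}(a_1)\cdots x_{i_N}(a_N)$; this map is injective, with inverse $\Psi_{id,w_0}$ on its image. Then $\Psi_{id,w_0}$ can be expressed by Laurent monomials in the extremal non-zero Plücker coordinates: for each $j\in[N]$ there is a Laurent monomial $m_j$ in the variables $P_I$, $I$ extremal, such that $a_j=m_j\big((P_I(M(\mathbf a)))_{I\text{ extremal}}\big)$ for all $\mathbf a\in\mathbb{R}_{>0}^N$.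
   Context: $x_k(a)$ is the $n\times n$ identity matrix with an extra entry $a$ in row $k$, column $k+1$. $P_I(M)$ is the minor of $M$ in rows $1,\dots,|I|$ and columns $I$. For flags of the form $M(\mathbf a)$ with $\mathbf a>0$, all $P_I$ are positive, and the extremal indices are defined as follows: for a $k$-subset $I$, let $B=\{i\in I:\exists j\notin I,\ i<j,\ P_{(I\setminus i)\cup j}\ne0\}$; if $P_I\ne0$ and $B\neq\emptyset$, set $b=\max B$, $a=\max\{j\notin I: P_{(I\setminus b)\cup j}\ne0\}$ and $\Xi(I)=(I\setminus b)\cup a$, otherwise $\Xi(I)=I$; with $I_k$ the Gale-minimal $k$-subset with $P_{I_k}\ne 0$ (here $I_k=[k]$), the extremal indices are the sets $\Xi^m(I_k)$, $m\ge0$, $k\in[n-1]$. (Concretely, these are the sets $\{1,\dots,m\}\cup\{k,\dots,n\}$ of size at most $n-1$.) *)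

(* Defs.v *)
From mathcomp Require Import all_boot all_order all_algebra.
Set Implicit Arguments. Unset Strict Implicit. Unset Printing Implicit Defensive.
Import Order.TTheory GRing.Theory Num.Theory.
Local Open Scope ring_scope.

Section Defs.
Variable R : realFieldType.
Variable n : nat.

(* x_k(a), k 1-based in [n-1]: identity plus entry a in row k, column k+1
   (0-based: row k-1, column k). *)
Definition xmat (k : nat) (a : R) : 'M[R]_n :=
  \matrix_(i, j) ((i == j)%:R + (if (val i == k.-1)%N && (val j == k) then a else 0)).

(* the reduced word (s_1 ... s_{n-1})(s_1 ... s_{n-2}) ... (s_1), as a list of
   1-based indices i_1, ..., i_N *)
Definition w0word : seq nat :=
  flatten [seq iota 1 (n.-1 - t) | t <- iota 0 n.-1].

Definition Mw (a : 'I_('C(n, 2)) -> R) : 'M[R]_n :=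
  foldr (fun (j : 'I_('C(n, 2))) acc => xmat (nth 0%N w0word j) (a j) *m acc) 1%:M (enum 'I_('C(n, 2))).

Lemma card_set_le (I : {set 'I_n}) : (#|I| <= n)%N.
Proof. by rewrite -[X in (_ <= X)%N](card_ord n) max_card. Qed.

Definition Pl (M : 'M[R]_n) (I : {set 'I_n}) : R :=
  \det (\matrix_(r < #|I|, c < #|I|)
          M (widen_ord (card_set_le I) r) (@enum_val _ (mem I) c)).

Definition Bset (M : 'M[R]_n) (I : {set 'I_n}) : {set 'I_n} :=
  [set i in I | [exists j, (j \notin I) && (val i < val j)%N
                            && (Pl M ((I :\ i) :|: [set j]) != 0)]].

Definition Xi (M : 'M[R]_n) (I : {set 'I_n}) : {set 'I_n} :=
  if Pl M I != 0 then
    match [pick i0 in Bset M I] with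
    | Some i0 =>
        let b := [arg max_(i > i0 in Bset M I) val i] in
        let A := [set j | (j \notin I) && (Pl M ((I :\ b) :|: [set j]) != 0)] in
        match [pick j0 in A] with
        | Some j0 => (I :\ b) :|: [set [arg max_(j > j0 in A) val j]]
        | None => I
        end
    | None => I
    end
  else I.

Definition gale_le (I J : {set 'I_n}) : bool :=
  (#|I| == #|J|) &&
  [forall r : 'I_n, (val r < #|I|)%N ==>
     (nth 0%N (map val (enum I)) r <= nth 0%N (map val (enum J)) r)%N].

Definition gale_min (M : 'M[R]_n) (k : nat) (I : {set 'I_n}) : Prop :=
  #|I| = k /\ Pl M I != 0 /\
  forall J : {set 'I_n}, #|J| = k -> Pl M J != 0 -> gale_le I J.

Definition extremal (M : 'M[R]_n) (I : {set 'I_n}) : Prop :=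
  exists k : nat, (1 <= k <= n.-1)%N /\
  exists Ik : {set 'I_n}, gale_min M k Ik /\
  exists m : nat, I = iter m (Xi M) Ik.

End Defs.

(* Main.v *)
Require Import Defs.
From mathcomp Require Import all_boot all_order all_algebra.
From mathcomp Require Import zify ring lra.
Set Implicit Arguments. Unset Strict Implicit. Unset Printing Implicit Defensive.
Import Order.TTheory GRing.Theory Num.Theory.
Local Open Scope ring_scope.

Ltac unval := repeat match goal with
 | H : context [@isSub.val_subdef _ _ _ _ ?x] |- _ => change (@isSub.val_subdef _ _ _ _ x) with (nat_of_ord x) in H
 | |- context [@isSub.val_subdef _ _ _ _ ?x] => change (@isSub.val_subdef _ _ _ _ x) with (nat_of_ord x) end.
Ltac vlia := unval; lia.

Section Work.
Variable R : realFieldType.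
Variable n' : nat.
Local Notation n := n'.+1.

Definition E (M : 'M[R]_n) (i j : nat) : R := M (inord i) (inord j).

Lemma EE (M : 'M[R]_n) (i j : 'I_n) : M i j = E M i j.
Proof. by rewrite /E !inord_val. Qed.

Lemma xmatE k a (N : 'M[R]_n) i j : (i <= n')%N -> (1 <= k <= n')%N ->
  E (xmat n k a *m N) i j = E N i j + (if i == k.-1 then a * E N k j else 0).
Proof.
move=> hi /andP[k1 kn]; rewrite /E mxE.
under eq_bigr => l _ do rewrite mxE mulrDl.
rewrite big_split /=.
rewrite (bigD1 (inord i)) //= eqxx mul1r big1 ?addr0; last first.
  by move=> l /negPf; rewrite eq_sym => ->; rewrite mul0r.
congr (_ + _); rewrite inordK //.
case: (i == k.-1); last by rewrite big1 // => l _; rewrite mul0r.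
rewrite (bigD1 (inord k)) //= inordK // eqxx big1 ?addr0 // => l hl.
case: eqP => [hk|]; last by rewrite mul0r.
by move: hl; rewrite -hk inord_val eqxx.
Qed.


Lemma E1 i j : (i <= n')%N -> (j <= n')%N -> E 1%:M i j = (i == j)%:R.
Proof.
move=> hi hj; by rewrite /E mxE -(inj_eq val_inj) /= !inordK.
Qed.

Fixpoint prodW (w : seq nat) (B : nat -> R) : 'M[R]_n :=
  if w is k :: w' then xmat n k (B 0%N) *m prodW w' (fun u => B u.+1) else 1%:M.

Lemma prodW_ext w B B' : (forall u, B u = B' u) -> prodW w B = prodW w B'.
Proof.
elim: w B B' => [|k w IH] B B' h //=.
by rewrite h (IH _ (fun u => B' u.+1)).
Qed.

Lemma prodW_cat w1 w2 B :
  prodW (w1 ++ w2) B = prodW w1 B *m prodW w2 (fun u => B (size w1 + u)%N).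
Proof.
elim: w1 B => [|k w1 IH] B /=; first by rewrite mul1mx; apply: prodW_ext.
rewrite IH mulmxA; congr (_ *m _); by apply: prodW_ext => u.
Qed.

Definition utri (M : 'M[R]_n) :=
  (forall i j, (j < i <= n')%N -> E M i j = 0) /\ (forall i, (i <= n')%N -> E M i i = 1).

Lemma utri_prodW w B : all (fun k => 1 <= k <= n')%N w -> utri (prodW w B).
Proof.
elim: w B => [|k w IH] B /=.
  move=> _; split => [i j /andP[h1 h2]|i hi]; rewrite E1 //; last by rewrite eqxx.
    by rewrite (gtn_eqF h1).
  by lia.
case/andP => /andP[hk1 hk2] /(IH (fun u => B u.+1)) [h1 h2]; split.
  move=> i j /andP[hji hi]; rewrite xmatE ?hk1 ?hk2 //; try lia.

  rewrite h1 ?hji // add0r; case: eqP => [hik|//]; rewrite h1 ?mulr0 //.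
  by apply/andP; split; lia.
move=> i hi; rewrite xmatE ?hk1 ?hk2 //.
rewrite h2 //; case: eqP => [hik|_]; last by rewrite addr0.
rewrite h1 ?mulr0 ?addr0 //.
by apply/andP; split; lia.
Qed.

Lemma col_prodW w B c : (c <= n')%N -> all (fun k => 1 <= k < c)%N w ->
  forall i, (i <= n')%N -> E (prodW w B) i c = (i == c)%:R.
Proof.
move=> hc; elim: w B => [|k w IH] B /=; first by move=> _ i hi; rewrite E1.
case/andP => /andP[hk1 hk2] /(IH (fun u => B u.+1)) h i hi.
rewrite xmatE ?hk1 //; last by lia.
rewrite h // (h k); last by lia.
rewrite (_ : (k == c) = false) ?mulr0; last by apply/eqP; lia.
by case: ifP; rewrite addr0.
Qed.

Lemma block_rel k0 len B (N : 'M[R]_n) i j : (1 <= k0)%N -> (k0 + len <= n'.+1)%N ->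
  (i <= n')%N -> (j <= n')%N ->
  E (prodW (iota k0 len) B *m N) i j =
  if (k0.-1 <= i < k0.-1 + len)%N
  then E N i j + B (i - k0.-1)%N * E (prodW (iota k0 len) B *m N) i.+1 j
  else E N i j.
Proof.
elim: len k0 B i => [|len IH] k0 B i hk0 hlen hi hj.
  by rewrite /= mul1mx addn0; case: ifP => //; lia.
rewrite [iota _ _]/= [prodW _ _]/= -mulmxA xmatE //; last by lia.
have IH' := IH k0.+1 (fun u => B u.+1) _ _ _ _ hj.
case: (eqVneq i k0.-1) => [->|hne].
  rewrite IH' //; try lia.
  rewrite ifF; last by lia.
  rewrite ifT; last by lia.
  rewrite subnn; congr (_ + _ * _).
  have -> : k0.-1.+1 = k0 by lia.
  rewrite xmatE //; try lia.
  by rewrite ifF ?addr0 //; lia.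
rewrite addr0 IH' //; try lia.
case: ifP => hc.
  rewrite ifT; last by lia.
  rewrite xmatE //; try lia.
  rewrite ifF ?addr0; last by lia.
  by congr (_ + B _ * _); lia.
by rewrite ifF //; lia.
Qed.


Definition mnr (M : 'M[R]_n) (rho gam : nat -> nat) (K : nat) : R :=
  \det (\matrix_(u < K, v < K) E M (rho u) (gam v)).

Lemma det_rowred (L : nat) (Am Bm : 'M[R]_L.+1) (beta : nat -> R) :
  (forall u v : 'I_L.+1, Bm u v =
     if (val u < L)%N then Am u v - beta u * Am (inord u.+1) v else Am u v) ->
  \det Am = \det Bm.
Proof.
move=> hB.
pose V : 'M[R]_L.+1 := \matrix_(u, v) ((u == v)%:R -
   (if val v == (val u).+1 then beta u else 0)).
have -> : Bm = V *m Am.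
  apply/matrixP => u v; rewrite hB mxE.
  under eq_bigr => w _ do rewrite mxE mulrBl.
  rewrite sumrB (bigD1 u) //= eqxx mul1r big1 ?addr0; last first.
    by move=> w /negPf; rewrite eq_sym => ->; rewrite mul0r.
  case: ifP => hu.
    rewrite (bigD1 (inord u.+1)) //= inordK // eqxx big1 ?addr0 //.
    move=> w hw; case: eqP => [hw'|]; last by rewrite mul0r.
    by move: hw; rewrite -hw' inord_val eqxx.
  rewrite big1 ?subr0 // => w _; case: eqP => [hw|]; last by rewrite mul0r.
  by have := ltn_ord w; rewrite hw; move: hu (ltn_ord u); lia.
rewrite det_mulmx -det_tr (det_trig (A := V^T)).
  by rewrite big1 ?mul1r // => i _; rewrite !mxE eqxx (ltn_eqF (ltnSn _)) subr0.
apply/is_trig_mxP => i j hij; rewrite !mxE.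
have -> : (j == i) = false by apply/negbTE; rewrite -(inj_eq val_inj) /=; lia.
rewrite ifF; first by rewrite subr0.
exact: ltn_eqF (leqW hij).
Qed.

Lemma FMred (M : 'M[R]_n) r0 (gam : nat -> nat) K : utri M ->
  (r0 + K.+1 <= n)%N -> gam 0%N = r0 ->
  mnr M (addn r0) gam K.+1 = mnr M (addn r0.+1) (fun v => gam v.+1) K.
Proof.
move=> [h1 h2] hK hg; rewrite /mnr (expand_det_col _ ord0).
rewrite big_ord_recl big1 ?addr0; last first.
  move=> i _; have hi := ltn_ord i; rewrite mxE lift0 hg h1 ?mul0r //=; apply/andP; split; lia.
rewrite mxE hg addn0 h2; last by lia.
rewrite mul1r /cofactor addn0 expr0 mul1r; congr (\det _).
by apply/matrixP => u v; rewrite !mxE !lift0 addSnnS.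
Qed.


Definition wfrom (s : nat) : seq nat :=
  flatten [seq iota 1 (n' - t) | t <- iota s (n' - s)].

Lemma wfrom_S s : (s < n')%N -> wfrom s = iota 1 (n' - s) ++ wfrom s.+1.
Proof.
move=> hs; rewrite /wfrom.
have -> : (n' - s = (n' - s.+1).+1)%N by lia.
by rewrite /= -subSS subSn.
Qed.

Lemma wfrom_end : wfrom n' = [::].
Proof. by rewrite /wfrom subnn. Qed.

Lemma wfrom_letters s x : x \in wfrom s -> (1 <= x <= n' - s)%N.
Proof.
case/flatten_mapP => t; rewrite !mem_iota => /andP[h1 h2] /andP[h3 h4].
apply/andP; split; lia.
Qed.

Definition off (s : nat) : nat := (\sum_(t < s) (n' - t))%N.

Lemma offS s : off s.+1 = (off s + (n' - s))%N.
Proof. by rewrite /off big_ord_recr. Qed.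

Section Blocks.
Variable A : nat -> R.

Definition MMg s := prodW (wfrom s) (fun u => A (off s + u)%N).

Definition G s r := \prod_(r <= l < n' - s) A (off s + l)%N.

Lemma MMg_S s : (s < n')%N ->
  MMg s = prodW (iota 1 (n' - s)) (fun u => A (off s + u)%N) *m MMg s.+1.
Proof.
move=> hs; rewrite /MMg wfrom_S // prodW_cat size_iota; congr (_ *m _).
by apply: prodW_ext => u; rewrite offS addnA.
Qed.

Lemma utri_MMg s : utri (MMg s).
Proof.
apply: utri_prodW; apply/allP => x /wfrom_letters; lia.
Qed.

Lemma col_MMg s : (s < n')%N -> forall i, (i <= n')%N ->
  E (MMg s.+1) i (n' - s)%N = (i == (n' - s)%N)%:R.
Proof.
move=> hs; apply: col_prodW; first by lia.
apply/allP => x /wfrom_letters; lia.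
Qed.

Lemma rel_MMg s i j : (s < n')%N -> (i <= n')%N -> (j <= n')%N ->
  E (MMg s) i j = if (i < n' - s)%N then E (MMg s.+1) i j + A (off s + i)%N * E (MMg s) i.+1 j
                  else E (MMg s.+1) i j.
Proof.
move=> hs hi hj; rewrite MMg_S // block_rel //; last by lia.
rewrite /= subn0 add0n; case: ifP => //.
Qed.

Lemma Ycol s r : (s < n')%N -> (r <= n' - s)%N -> E (MMg s) r (n' - s)%N = G s r.
Proof.
move=> hs; move: {2}(n' - s - r)%N (erefl (n' - s - r)%N) => d.
elim: d r => [|d IH] r hd hr.
  have -> : r = (n' - s)%N by lia.
  rewrite rel_MMg //; try lia.
  by rewrite ltnn col_MMg ?eqxx /G ?big_geq //; lia.
rewrite rel_MMg //; try lia.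
rewrite ifT; last by lia.
rewrite col_MMg //; last by lia.
rewrite (_ : (r == (n' - s)%N) = false) ?add0r; last by apply/eqP; lia.
rewrite IH; try lia.
by rewrite /G (big_ltn (m := r)) //; lia.
Qed.


Lemma Qrec s r1 g0 L : (s < n')%N -> (g0 + L = n' - s)%N -> (r1 + L < n' - s)%N ->
  mnr (MMg s) (addn r1) (addn g0) L.+1 = G s (r1 + L) * mnr (MMg s.+1) (addn r1) (addn g0) L.
Proof.
move=> hs hg hr; rewrite /mnr.
pose Bm : 'M[R]_L.+1 := \matrix_(u, v) if (val u < L)%N
   then E (MMg s.+1) (r1 + u) (g0 + v) else E (MMg s) (r1 + u) (g0 + v).
rewrite (det_rowred (Bm := Bm) (beta := fun u => A (off s + (r1 + u))%N)); last first.
  move=> u v; have hu' := ltn_ord u; have hv' := ltn_ord v.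
  rewrite !mxE; case: ifP => hu //.
  have hu2 : (u < L)%N := hu.
  rewrite inordK; last by lia.
  rewrite (rel_MMg (s := s) (i := (r1 + u)%N)) //; try lia.
  by rewrite ifT ?addnS ?addrK //; lia.
rewrite (expand_det_col _ ord_max) big_ord_recr /= big1 ?add0r; last first.
  move=> i _; have hi := ltn_ord i; rewrite !mxE /= hi hg col_MMg //; last by lia.
  by rewrite (_ : (r1 + i == (n' - s)%N) = false) ?mul0r //; apply/eqP; lia.
rewrite !mxE /= ltnn hg Ycol //; last by lia.
rewrite /cofactor addnn -signr_odd odd_double expr0 mul1r; congr (_ * \det _).
apply/matrixP => u v; rewrite !mxE !lift_max /=; rewrite ifT //; move: (ltn_ord u); rewrite /bump; case: leqP => /=; lia.
Qed.

Lemma Qclosed L : forall s r1 g0, (r1 + L + s <= n')%N -> (g0 + L = n'.+1 - s)%N ->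
  mnr (MMg s) (addn r1) (addn g0) L = \prod_(t < L) G (s + t) (r1 + (L - t.+1)).
Proof.
elim: L => [|L IH] s r1 g0 h1 h2.
  by rewrite /mnr big_ord0 det_mx00.
rewrite Qrec; try lia.
rewrite (IH s.+1) ?big_ord_recl; try lia.
rewrite addn0 subSS subn0; congr (_ * _).
by apply: eq_bigr => i _; rewrite addSnnS.
Qed.

End Blocks.

Lemma enum_filt (J : {set 'I_n}) : enum J = filter (mem J) (enum 'I_n).
Proof. by rewrite {1}/enum_mem -enumT. Qed.

Lemma sorted_enumJ (J : {set 'I_n}) : sorted ltn (map val (enum J)).
Proof.
rewrite enum_filt; apply: (subseq_sorted ltn_trans (s2 := iota 0 n)); last exact: iota_ltn_sorted.
by rewrite -val_enum_ord map_subseq // filter_subseq.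
Qed.

Definition Sx (m L : nat) : {set 'I_n} := [set i : 'I_n | ((val i < m) || (n - L <= val i))%N].

Lemma enumS m L : (m + L <= n)%N -> map val (enum (Sx m L)) = iota 0 m ++ iota (n - L) L.
Proof.
move=> hmL; rewrite enum_filt.
rewrite (eq_filter (a2 := preim val (fun x => (x < m) || (n - L <= x))%N)); last first.
  by move=> i; rewrite /= inE.
rewrite -filter_map val_enum_ord.
have -> : iota 0 n = iota 0 m ++ iota m (n - L - m) ++ iota (n - L) L.
  have e : iota 0 n = iota 0 (m + ((n - L - m) + L)) by congr iota; lia.
  rewrite e iotaD iotaD add0n (_ : (m + (n - L - m) = n - L)%N) //; lia.
rewrite !filter_cat; congr (_ ++ _).
  apply/all_filterP/allP => x; rewrite mem_iota => /= h; lia.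
rewrite (eq_in_filter (a2 := pred0)); last first.
  by move=> x; rewrite mem_iota /= => h; apply/negbTE; lia.
rewrite filter_pred0 /=; apply/all_filterP/allP => x; rewrite mem_iota => /= h; lia.
Qed.

Lemma cardS m L : (m + L <= n)%N -> #|Sx m L| = (m + L)%N.
Proof. by move=> h; rewrite cardE -(size_map val) enumS // size_cat !size_iota. Qed.

Lemma mnr_ext M rho rho' gam gam' K :
  (forall u, (u < K)%N -> rho u = rho' u) -> (forall v, (v < K)%N -> gam v = gam' v) ->
  mnr M rho gam K = mnr M rho' gam' K.
Proof.
move=> h1 h2; rewrite /mnr; congr (\det _); apply/matrixP => u v.
by rewrite !mxE h1 ?h2.
Qed.

Lemma Pl_mnr (M : 'M[R]_n) (I : {set 'I_n}) :
  Pl M I = mnr M (addn 0) (fun v => nth 0%N (map val (enum I)) v) #|I|.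
Proof.
rewrite /Pl /mnr; congr (\det _); apply/matrixP => r c; rewrite !mxE /E.
have hr := ltn_ord r; have hI := card_set_le I.
have hc : (c < size (enum I))%N by rewrite -cardE.
have e1 : nth 0%N (map val (enum I)) c = val (enum_val c).
  by rewrite (nth_map (enum_val c)) // -enum_val_nth.
congr (M _ _); apply: val_inj; rewrite /= inordK //.
- by rewrite add0n (leq_trans hr hI).
- by rewrite e1 ltn_ord.
Qed.

Lemma FMiter (M : 'M[R]_n) m L gam : utri M -> (m + L <= n)%N ->
  (forall v, (v < m)%N -> gam v = v) ->
  forall k, (k <= m)%N ->
  mnr M (addn 0) gam (m + L) = mnr M (addn k) (fun v => gam (k + v)%N) (m - k + L).
Proof.
move=> hu hmL hg; elim => [|k IH] hk.
  by rewrite subn0; apply: mnr_ext.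
rewrite IH; last by lia.
have -> : (m - k + L = (m - k.+1 + L).+1)%N by lia.
rewrite FMred //; try lia; last by rewrite addn0 hg //; lia.
by apply: mnr_ext => v _ //; rewrite addSnnS.
Qed.

Definition Pv (A : nat -> R) (m L : nat) := \prod_(t < L) G A t (m + (L - t.+1)).

Lemma PlS A m L : (m + L <= n')%N -> Pl (MMg A 0) (Sx m L) = Pv A m L.
Proof.
move=> hmL; rewrite Pl_mnr cardS; last by lia.
rewrite enumS; last by lia.
rewrite (FMiter (utri_MMg A 0) _ _ (leqnn m)); first last.
- by move=> v hv; rewrite nth_cat size_iota hv nth_iota.
- by lia.
rewrite subnn add0n (_ : mnr _ (addn m) _ L = mnr (MMg A 0) (addn m) (addn (n - L)) L); last first.
  apply: mnr_ext => // v hv.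
  by rewrite nth_cat size_iota ltnNge leq_addr /= addKn nth_iota.
rewrite Qclosed; try lia.
by apply: eq_bigr => t _; rewrite add0n.
Qed.


Lemma setXi m L (b a : 'I_n) : (1 <= m)%N -> (m + L <= n')%N -> val b = m.-1 ->
  val a = (n - L.+1)%N -> (Sx m L :\ b) :|: [set a] = Sx m.-1 L.+1.
Proof.
move=> h1 h2 hb ha; apply/setP => i; rewrite !inE.
have -> : (i == b) = (val i == m.-1) by rewrite -hb.
have -> : (i == a) = (val i == (n - L.+1)%N) by rewrite -ha.
move: (val i) => x; lia.
Qed.

Lemma XiS (M : 'M[R]_n) m L : (1 <= m)%N -> (m + L <= n')%N -> Pl M (Sx m L) != 0 ->
  Pl M (Sx m.-1 L.+1) != 0 -> Xi M (Sx m L) = Sx m.-1 L.+1.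
Proof.
move=> h1 h2 hP hP'.
rewrite /Xi hP /=.
pose b0 : 'I_n := inord m.-1.
pose j0 : 'I_n := inord (n - L.+1).
have hb0 : val b0 = m.-1 by apply: inordK; lia.
have hj0 : val j0 = (n - L.+1)%N by apply: inordK; lia.
have hB : b0 \in Bset M (Sx m L).
  rewrite inE; apply/andP; split; first by rewrite inE hb0; lia.
  apply/existsP; exists j0; rewrite (setXi _ _ hb0 hj0) // hP' andbT inE hb0 hj0; lia.
case: pickP => [i0 hi0|hn]; last by move: (hn b0); rewrite hB.
case: arg_maxnP => [//|b hb hbmax].
have hbv : val b = m.-1.
  have := hbmax b0 hB; move: hb; rewrite inE => /andP[]; rewrite inE => hbS.
  case/existsP => j /andP[/andP[hjS hbj] _]; move: hjS; rewrite inE => hjS /= hge.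
  have hjn := ltn_ord j; vlia.
have hA : j0 \in [set j | (j \notin Sx m L) && (Pl M ((Sx m L :\ b) :|: [set j]) != 0)].
  by rewrite inE (setXi _ _ hbv hj0) // hP' andbT inE hj0; lia.
case: pickP => [j1 hj1|hn]; last by move: (hn j0); rewrite hA.
case: arg_maxnP => [//|a ha hamax].
have hav : val a = (n - L.+1)%N.
  have := hamax j0 hA; move: ha; rewrite inE => /andP[]; rewrite inE => haS _ /= hge.
  have han := ltn_ord a; vlia.
by rewrite (setXi _ _ hbv hav).
Qed.

Lemma path_nth (s : seq nat) x0 : path ltn x0 s -> forall r, (r < size s)%N -> (x0 + r < nth 0%N s r)%N.
Proof.
elim: s x0 => [|y s IH] x0 //= /andP[hxy hp] [|r] hr /=; first by rewrite addn0.
have := IH y hp r hr; lia.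
Qed.

Lemma sorted_nth (s : seq nat) : sorted ltn s -> forall r, (r < size s)%N -> (r <= nth 0%N s r)%N.
Proof.
case: s => [|x s] //= hp [|r] hr //=.
have := path_nth hp hr; lia.
Qed.

Lemma galeS (M : 'M[R]_n) k : (1 <= k <= n')%N -> Pl M (Sx k 0) != 0 -> gale_min M k (Sx k 0).
Proof.
move=> hk hP; rewrite /gale_min cardS; last by lia.
rewrite addn0; split => //; split => // J hJ _.
rewrite /gale_le cardS ?addn0 ?hJ ?eqxx /=; last by lia.
apply/forallP => r; apply/implyP => hr.
rewrite enumS ?addn0 /=; last by lia.
rewrite cats0 nth_iota // add0n; apply: sorted_nth; first exact: sorted_enumJ.
by rewrite size_map -cardE hJ.
Qed.

Lemma iterXi (M : 'M[R]_n) : (forall m L, (m + L <= n')%N -> Pl M (Sx m L) != 0) ->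
  forall L m, (m + L <= n')%N -> iter L (Xi M) (Sx (m + L) 0) = Sx m L.
Proof.
move=> hP; elim => [|L IH] m h; first by rewrite addn0.
rewrite iterS -addSnnS IH; last by lia.
by rewrite XiS //; try lia; apply: hP; lia.
Qed.

Lemma extS (M : 'M[R]_n) m L : (forall m L, (m + L <= n')%N -> Pl M (Sx m L) != 0) ->
  (1 <= m + L <= n')%N -> extremal M (Sx m L).
Proof.
move=> hP h; exists (m + L)%N; split => //.
exists (Sx (m + L) 0); split.
  by apply: galeS => //; apply: hP; lia.
by exists L; rewrite iterXi //; lia.
Qed.


Lemma sumC k : (\sum_(t < k) (k - t) = 'C(k.+1, 2))%N.
Proof.
elim: k => [|k IH]; first by rewrite big_ord0.
rewrite big_ord_recl subn0 (eq_bigr (fun t : 'I_k => k - t)%N); last first.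
  by move=> t _; rewrite lift0 subSS.
by rewrite IH [in RHS]binS bin1 addnC.
Qed.

Lemma off_end : off n' = 'C(n, 2).
Proof. exact: sumC. Qed.

Lemma size_wfrom s : (s <= n')%N -> (off s + size (wfrom s) = off n')%N.
Proof.
have [d hd] : exists d, (n' - s)%N = d by eexists.
elim: d s hd => [|d IH] s hd hs.
  have -> : s = n' by lia.
  by rewrite wfrom_end addn0.
rewrite wfrom_S; last by lia.
rewrite size_cat size_iota addnA -offS IH //; lia.
Qed.

Lemma size_w0 : size (w0word n) = 'C(n, 2).
Proof.
have -> : w0word n = wfrom 0 by rewrite /w0word /wfrom /= subn0.
by rewrite -off_end -(size_wfrom (leq0n n')) /off big_ord0.
Qed.

Lemma prodW_foldr w B :
  prodW w B = foldr (fun t acc => xmat n (nth 0%N w t) (B t) *m acc) 1%:M (iota 0 (size w)).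
Proof.
elim: w B => [|k w IH] B //=.
by rewrite IH (iotaDl 1 0) foldr_map.
Qed.

Definition Aof (a : 'I_('C(n, 2)) -> R) (t : nat) : R := odflt 1 (omap a (insub t)).

Lemma Mw_MMg a : Mw a = MMg (Aof a) 0.
Proof.
rewrite /Mw.
have h : forall l : seq 'I_('C(n, 2)),
  foldr (fun (j : 'I_('C(n, 2))) acc => xmat n (nth 0%N (w0word n) j) (a j) *m acc) 1%:M l =
  foldr (fun t acc => xmat n (nth 0%N (w0word n) t) (Aof a t) *m acc) 1%:M (map val l).
  elim => [|j l IHl] //=; by rewrite IHl /Aof valK.
rewrite h val_enum_ord /MMg (@prodW_ext _ _ (Aof a)); last by move=> u; rewrite /off big_ord0.
rewrite prodW_foldr -size_w0.
by have -> : w0word n = wfrom 0 by rewrite /w0word /wfrom /= subn0.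
Qed.

Lemma decomp t : (t < off n')%N -> exists s r, [/\ (s < n')%N, (r < n' - s)%N & t = (off s + r)%N].
Proof.
suff H : forall s, (t < off s)%N -> (s <= n')%N ->
  exists s0 r, [/\ (s0 < s)%N, (r < n' - s0)%N & t = (off s0 + r)%N].
  move=> ht; have [s0 [r [h1 h2 h3]]] := H n' ht (leqnn _); by exists s0, r.
elim => [|s IH] ht hs; first by rewrite /off big_ord0 in ht.
case: (ltnP t (off s)) => h.
  have [s0 [r [h1 h2 h3]]] := IH h (ltnW hs); exists s0, r; split => //; lia.
exists s, (t - off s)%N; split => //; move: ht; rewrite offS; lia.
Qed.

Definition exl (l : seq ({set 'I_n} * int)) (I : {set 'I_n}) : int :=
  \sum_(p <- l) (if I == p.1 then p.2 else 0).

Lemma exl_mem l I : exl l I != 0 -> exists p, p \in l /\ I = p.1.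
Proof.
elim: l => [|p l IH]; first by rewrite /exl big_nil eqxx.
rewrite /exl big_cons; case: (eqVneq I p.1) => [->|hne] h; first by exists p; rewrite mem_head.
have hh : exl l I != 0 by rewrite add0r in h.
have [q [hq ->]] := IH hh.
by exists q; rewrite inE hq orbT.
Qed.

Lemma prod_ex (f : {set 'I_n} -> R) l : (forall p, p \in l -> f p.1 != 0) ->
  \prod_(I | exl l I != 0) f I ^ exl l I = \prod_(p <- l) f p.1 ^ p.2.
Proof.
move=> hf.
have -> : \prod_(I | exl l I != 0) f I ^ exl l I = \prod_I f I ^ exl l I.
  rewrite [RHS](bigID (fun I => exl l I != 0)) /= [X in _ = _ * X]big1 ?mulr1 //.
  by move=> I /negPn/eqP ->; rewrite expr0z.
elim: l hf => [|p l IH] hf.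
  by rewrite big_nil big1 // => I _; rewrite /exl big_nil expr0z.
rewrite big_cons -IH; last by move=> q hq; apply: hf; rewrite inE hq orbT.
rewrite -[f p.1 ^ p.2](_ : \prod_I f I ^ (if I == p.1 then p.2 else 0) = _); last first.
  rewrite (bigD1 p.1) //= eqxx big1 ?mulr1 // => I /negPf ->; by rewrite expr0z.
rewrite -big_split; apply: eq_bigr => I _ /=; rewrite /exl big_cons.
case: (eqVneq I p.1) => [->|hne]; last by rewrite add0r expr0z mul1r.
by rewrite expfzDr // hf // mem_head.
Qed.

Lemma G_pos A s r : (forall t, 0 < A t) -> 0 < G A s r.
Proof. by move=> h; apply: prodr_gt0 => l _. Qed.

Lemma Pv_pos A m L : (forall t, 0 < A t) -> 0 < Pv A m L.
Proof. by move=> h; apply: prodr_gt0 => t _; apply: G_pos. Qed.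

Lemma PvS A m L : Pv A m L.+1 = Pv A m.+1 L * G A L m.
Proof.
rewrite /Pv big_ord_recr /= subnn addn0; congr (_ * _).
by apply: eq_bigr => t _; rewrite /=; congr (G _ _ _); have := ltn_ord t; lia.
Qed.

Lemma Gstep A s r : (r < n' - s)%N -> G A s r = A (off s + r)%N * G A s r.+1.
Proof. by move=> h; rewrite /G big_ltn. Qed.

Lemma Gend A s : G A s (n' - s) = 1.
Proof. by rewrite /G big_geq. Qed.


Lemma main_j (j : 'I_('C(n, 2))) : exists ej : {set 'I_n} -> int,
  forall a : 'I_('C(n, 2)) -> R, (forall j, 0 < a j) ->
    (forall I : {set 'I_n}, ej I != 0 -> extremal (Mw a) I) /\
    a j = \prod_(I : {set 'I_n} | ej I != 0) (Pl (Mw a) I) ^ (ej I).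
Proof.
have [s [r [hs hr hj]]] : exists s r, [/\ (s < n')%N, (r < n' - s)%N & val j = (off s + r)%N].
  by apply: decomp; rewrite off_end ltn_ord.
pose l := if (r.+1 < n' - s)%N
  then [:: (Sx r s.+1, 1%Z); (Sx r.+2 s, 1%Z); (Sx r.+1 s, (-1)%Z); (Sx r.+1 s.+1, (-1)%Z)]
  else [:: (Sx r s.+1, 1%Z); (Sx r.+1 s, (-1)%Z)].
have hl : forall p, p \in l -> exists m L, p.1 = Sx m L /\ (1 <= m + L <= n')%N.
  move=> p; rewrite /l; case: ifP => hc; rewrite !inE => hp.
    case/or4P: hp => /eqP -> /=.
    - by exists r, s.+1; split => //; lia.
    - by exists r.+2, s; split => //; lia.
    - by exists r.+1, s; split => //; lia.
    - by exists r.+1, s.+1; split => //; lia.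
  case/orP: hp => /eqP -> /=.
  - by exists r, s.+1; split => //; lia.
  - by exists r.+1, s; split => //; lia.
exists (exl l) => a ha.
pose A := Aof a.
have hA : forall t, 0 < A t.
  move=> t; rewrite /A /Aof; case: insubP => [u _ _|_] //=.
have hPl : forall m L, (m + L <= n')%N -> Pl (Mw a) (Sx m L) = Pv A m L.
  by move=> m L h; rewrite Mw_MMg; apply: PlS.
have hnz : forall m L, (m + L <= n')%N -> Pl (Mw a) (Sx m L) != 0.
  by move=> m L h; rewrite hPl // gt_eqF // Pv_pos.
split.
  move=> I /exl_mem [p [hp ->]]; have [m [L [-> hmL]]] := hl p hp.
  by apply: extS => //.
rewrite prod_ex; last first.
  move=> p hp; have [m [L [-> hmL]]] := hl p hp; apply: hnz; lia.
have haj : a j = A (off s + r)%N by rewrite /A /Aof -hj valK.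
have e1 := PvS A r s.
have e3 := Gstep A hr.
have hPn : forall m L, Pv A m L != 0 by move=> m L; rewrite gt_eqF // Pv_pos.
have hGn : forall r', G A s r' != 0 by move=> r'; rewrite gt_eqF // G_pos.
have hAn : A (off s + r)%N != 0 by rewrite gt_eqF.
rewrite haj /l; case: ifP => hc /=; rewrite !big_cons big_nil /=.
  rewrite !hPl; try lia.
  rewrite !expr1z !exprN1 mulr1.
  have e2 := PvS A r.+1 s.
  rewrite e1 e2 e3; field.
  by rewrite !hPn hGn.
rewrite !hPl; try lia.
rewrite !expr1z !exprN1 mulr1.
have hc' : r.+1 = (n' - s)%N by lia.
rewrite e1 e3 hc' Gend mulr1; field.
by rewrite !hPn.
Qed.

End Work.

Theorem mainTheorem9 (R : realFieldType) (n : nat) :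
  exists e : 'I_('C(n, 2)) -> {set 'I_n} -> int,
    forall a : 'I_('C(n, 2)) -> R, (forall j, 0 < a j) ->
      forall j : 'I_('C(n, 2)),
        (forall I : {set 'I_n}, e j I != 0 -> extremal (Mw a) I) /\
        a j = \prod_(I : {set 'I_n} | e j I != 0) (Pl (Mw a) I) ^ (e j I).
Proof.
case: n => [|n'].
  exists (fun _ _ => 0) => a _ j; have h : (j < 0)%N := ltn_ord j.
  by rewrite ltn0 in h.
have [e he] := fin_all_exists (@main_j R n').
by exists e => a ha j; apply: he.
Qed.
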